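(* Let $H$ be a binary tree based graph, $M$ a pseudomatching of $H$, $S$ a set of literals with $Vars(S)=V(H)\setminus\bigcup M$ that is $1$-comfortable w.r.t. $M$, and $\varphi\in{\bf CNF}(M)$. Then $\Pr({\bf ES}(\varphi)\mid{\bf EC}(S))=(2/3)^{|M|}$.
   Context: Sets of literals never contain a variable together with its negation; $Vars(S)$ is the set of variables occurring in $S$. A rooted tree is extended if none of its leaves has a sibling. A graph $H$ is a binary tree based graph if it is the edge-disjoint union of extended rooted trees $T_1,\dots,T_m$ with roots $t_1,\dots,t_m$ such that every leaf of some $T_i$ is a leaf of exactly two of the trees, and any two trees have at most one common vertex, which is a leaf of both. Vertices are root vertices, leaf vertices, and internal vertices (the rest); two internal vertices are siblings if they are siblings in the tree containing them. $T_i,T_j$ are adjacent if they share a leaf $\ell_{i,j}$; $P_{i,j}$ is the path between $t_i$ and $t_j$ in $T_i\cup T_j$; $P^{1/2}_{i\to j}$ is the path in $T_i$ from $t_i$ to $\ell_{i,j}$. A pseudoedge is a pair $\{t_i,t_j\}$ with $T_i,T_j$ adjacent; a pseudomatching is a set of pairwise disjoint pseudoedges; $\bigcup M$ is the set of their ends. $\phi_H$ is the CNF on variables $V(H)$ with a clause $C_{i,j}$ (positive literals of $V(P_{i,j})$) for each pseudoedge. ${\bf CNF}(M)$ is the set of CNFs consisting, for each $\{t_i,t_j\}\in M$, of one clause that is either the disjunction of positive literals of $V(P^{1/2}_{i\to j})$ or of $V(P^{1/2}_{j\to i})$. $S$ falsifies a clause if all its variables occur negatively in $S$. $S$ respects $\{t_i,t_j\}$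 if all non-root variables of $C_{i,j}$ occur negatively in $S$ and the siblings of all internal variables of $C_{i,j}$ occur positively in $S$. $S$ is $1$-comfortable w.r.t. $M$ if it falsifies no clause of $\phi_H$ and respects every pseudoedge of $M$. The positive literal $\ell_{i,j}$ is fixed w.r.t. $S'$ if $\ell_{i,j}\in S'$ and all other variables of $C_{i,j}$ occur negatively in $S'$; $Fix(S')$ is the set of fixed literals. ${\bf SAT}(H)$ is the set of satisfying assignments of $\phi_H$; each $S'\in{\bf SAT}(H)$ has probability $(1/2)^{|V(H)\setminus Fix(S')|}$. ${\bf EC}(S)=\{S'\in{\bf SAT}(H):S\subseteq S'\}$; ${\bf ES}(\varphi)=\{S'\in{\bf SAT}(H): S'\text{ satisfies }\varphi\}$. *)

(* Defs.v *)
From mathcomp Require Import all_boot all_order all_algebra.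
Set Implicit Arguments. Unset Strict Implicit. Unset Printing Implicit Defensive.
Import GRing.Theory Num.Theory.

(* A family of m rooted trees on the vertex type V.  Tree i has vertex set
   VT i, root rt i, and parent function par i (the root is its own parent). *)
Record tree_family (V : finType) (m : nat) := TreeFamily {
  VT : 'I_m -> {set V};
  rt : 'I_m -> V;
  par : 'I_m -> V -> V }.

Section Defs.
Variables (V : finType) (m : nat) (F : tree_family V m).

Definition childb (i : 'I_m) (u v : V) : bool :=
  [&& u \in VT F i, u != rt F i & par F i u == v].

Definition leafb (i : 'I_m) (v : V) : bool :=
  [&& v \in VT F i, v != rt F i & [forall u, ~~ childb i u v]].

Definition sibb (i : 'I_m) (u w : V) : bool :=
  [&& u \in VT F i, w \in VT F i, u != rt F i, w != rt F i, u != w &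
      par F i u == par F i w].

Definition rooted_tree (i : 'I_m) : Prop :=
  [/\ rt F i \in VT F i, par F i (rt F i) = rt F i,
      (forall v, v \in VT F i -> par F i v \in VT F i) &
      (forall v, v \in VT F i -> exists k, iter k (par F i) v = rt F i)].

Definition extended (i : 'I_m) : Prop :=
  forall v w, leafb i v -> ~~ sibb i v w.

Definition is_btbg : Prop :=
  [/\ (forall i, rooted_tree i), (forall i, extended i),
      (forall v : V, exists i, v \in VT F i),
      (forall i v, leafb i v -> #|[set j | leafb j v]| = 2) &
      (forall i j, i != j ->
         #|VT F i :&: VT F j| <= 1 /\
         (forall v, v \in VT F i :&: VT F j -> leafb i v && leafb j v))].

Definition isroot (v : V) : bool := [exists k, v == rt F k].
Definition isleaf (v : V) : bool := [exists k, leafb k v].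
Definition internal (v : V) : bool := ~~ isroot v && ~~ isleaf v.
Definition siblings (u w : V) : bool := [exists i, sibb i u w].

Definition adj (i j : 'I_m) : bool :=
  (i != j) && [exists v, leafb i v && leafb j v].
Definition ell (i j : 'I_m) : V :=
  odflt (rt F i) [pick v | leafb i v && leafb j v].

Definition anc (i : 'I_m) (v : V) : {set V} :=
  [set iter k (par F i) v | k : 'I_#|V|].

Definition half (i j : 'I_m) : {set V} := anc i (ell i j).
(* V(P_{i,j}) = variables of the clause C_{i,j} *)
Definition Cl (i j : 'I_m) : {set V} := half i j :|: half j i.

(* pseudoedges are represented by the 2-sets {i,j} of tree indices
   (equivalently the root pairs {t_i,t_j}; roots are distinct) *)
Definition pseudoedge (e : {set 'I_m}) : bool :=
  [exists i, exists j, (e == [set i; j]) && adj i j].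
Definition pseudomatching (M : {set {set 'I_m}}) : Prop :=
  (forall e, e \in M -> pseudoedge e) /\
  (forall e1 e2, e1 \in M -> e2 \in M -> e1 != e2 -> [disjoint e1 & e2]).
Definition rootsM (M : {set {set 'I_m}}) : {set V} :=
  [set rt F i | i in \bigcup_(e in M) e].

(* partial assignments = consistent sets of literals;
   S v = Some true : positive literal v in S; Some false: negative literal *)
Definition pasg := {ffun V -> option bool}.
Definition Vars (S : pasg) : {set V} := [set v | S v != None].

Definition falsifies (S : pasg) (C : {set V}) : bool :=
  [forall v in C, S v == Some false].

Definition respects (S : pasg) (i j : 'I_m) : bool :=
  [forall v in Cl i j, ~~ isroot v ==> (S v == Some false)] &&
  [forall v in Cl i j, internal v ==> [forall w, siblings v w ==> (S w == Some true)]].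

Definition comfortable1 (M : {set {set 'I_m}}) (S : pasg) : Prop :=
  (forall i j, adj i j -> ~~ falsifies S (Cl i j)) /\
  (forall e i j, e \in M -> e = [set i; j] -> respects S i j).

Definition asg := {ffun V -> bool}.
Definition satC (A : asg) (C : {set V}) : bool := [exists v in C, A v].
Definition SAT : {set asg} :=
  [set A : asg | [forall i, forall j, adj i j ==> satC A (Cl i j)]].

Definition Fix (A : asg) : {set V} :=
  [set v | [exists i, exists j, [&& adj i j, v == ell i j, A v &
       [forall u in Cl i j, (u != v) ==> ~~ A u]]]].

Definition prob (A : asg) : rat := (2%:R^-1) ^+ #|~: Fix A|.
Definition Pr (X : {set asg}) : rat := \sum_(A in X) prob A.
Definition CondPr (X Y : {set asg}) : rat := Pr (X :&: Y) / Pr Y.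

Definition EC (S : pasg) : {set asg} :=
  [set A in SAT | [forall v, (S v == None) || (S v == Some (A v))]].

(* a CNF of CNF(M) is given by a choice ph : for e = {i,j} in M,
   ph e = (i,j) selects the clause V(P^{1/2}_{i->j}) *)
Definition cnf_of (M : {set {set 'I_m}}) (ph : {set 'I_m} -> 'I_m * 'I_m) : Prop :=
  forall e, e \in M -> e = [set (ph e).1; (ph e).2].
Definition ES (M : {set {set 'I_m}}) (ph : {set 'I_m} -> 'I_m * 'I_m) : {set asg} :=
  [set A in SAT | [forall e in M, satC A (half (ph e).1 (ph e).2)]].

End Defs.

(* Main.v *)
Require Import Defs.
From mathcomp Require Import all_boot all_order all_algebra.
Import GRing.Theory Num.Theory.
Set Implicit Arguments. Unset Strict Implicit. Unset Printing Implicit Defensive.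

Section Basic.
Variables (V : finType) (m : nat) (F : tree_family V m).
Hypothesis Hb : is_btbg F.

Notation VT := (VT F). Notation rt := (rt F). Notation par := (par F).

Lemma rooted i : [/\ rt i \in VT i, par i (rt i) = rt i,
      (forall v, v \in VT i -> par i v \in VT i) &
      (forall v, v \in VT i -> exists k, iter k (par i) v = rt i)].
Proof. by case: (Hb : [/\ _, _, _, _ & _]) => H _ _ _ _; exact: H i. Qed.


Lemma rt_in i : rt i \in VT i.
Proof. by case: (rooted i) => H _ _ _. Qed.

Lemma par_in i v : v \in VT i -> par i v \in VT i.
Proof. by case: (rooted i) => _ _ H _; apply: H. Qed.

Lemma par_rt i : par i (rt i) = rt i.
Proof. by case: (rooted i) => _ H _ _. Qed.

Lemma iter_in i v k : v \in VT i -> iter k (par i) v \in VT i.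
Proof. by move=> Hv; elim: k => //= k IH; apply: par_in. Qed.

Lemma common_leaf i j v : i != j -> v \in VT i -> v \in VT j -> leafb F i v && leafb F j v.
Proof.
case: (Hb : [/\ _, _, _, _ & _]) => _ _ _ _ H ij vi vj; case: (H i j ij) => _; apply; by rewrite inE vi vj.
Qed.

Lemma rt_VT k a : rt k \in VT a -> k = a.
Proof.
move=> H; apply/eqP; apply/negPn/negP => ka.
by case/andP: (common_leaf ka (rt_in k) H); rewrite /leafb eqxx andbF.
Qed.

Lemma rt_inj i j : rt i = rt j -> i = j.
Proof. by move=> E; apply: rt_VT; rewrite E rt_in. Qed.

Lemma leaf_in i v : leafb F i v -> v \in VT i.
Proof. by case/and3P. Qed.

Lemma leaf_nrt i v : leafb F i v -> v != rt i.
Proof. by case/and3P. Qed.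

Lemma leaf_notroot i v : leafb F i v -> ~~ isroot F v.
Proof.
move=> L; apply/existsP => -[k /eqP E].
have := leaf_in L; rewrite E => /rt_VT ki; subst k.
by move: (leaf_nrt L); rewrite E eqxx.
Qed.

Lemma leaf_nochild i v u : leafb F i v -> u \in VT i -> u != rt i -> par i u != v.
Proof.
case/and3P => _ _ /forallP H ui ur; apply/negP => E.
by move: (H u); rewrite /childb ui ur E.
Qed.

Lemma rt_reach i v : v \in VT i -> exists2 k, k < #|V| & iter k (par i) v = rt i.
Proof.
move=> vi; case: (rooted i) => _ _ _ /(_ v vi) [k Ek].
have C : fconnect (par i) v (rt i) by rewrite -Ek fconnect_iter.
exists (findex (par i) v (rt i)); last exact: iter_findex.
apply: (leq_trans (findex_max C)); exact: max_card.
Qed.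

Lemma ancP i v u : reflect (exists2 k, k < #|V| & u = iter k (par i) v) (u \in anc F i v).
Proof.
apply: (iffP imsetP) => [[k _ ->]|[k kn ->]]; first by exists k.
by exists (Ordinal kn).
Qed.

Lemma anc_in i v u : v \in VT i -> u \in anc F i v -> u \in VT i.
Proof. by move=> vi /ancP [k _ ->]; apply: iter_in. Qed.

Lemma rt_anc i v : v \in VT i -> rt i \in anc F i v.
Proof. by move=> /rt_reach [k kn E]; apply/ancP; exists k. Qed.

Lemma self_anc i v : v \in anc F i v.
Proof. by apply/ancP; exists 0 => //; apply/card_gt0P; exists v. Qed.

Lemma sibb_sym i u w : sibb F i u w -> sibb F i w u.
Proof.
rewrite /sibb => /and5P [-> -> -> -> /andP [uw /eqP E]].
by rewrite eq_sym uw E eqxx.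
Qed.

Lemma sib_notleaf i u w : sibb F i u w -> ~~ leafb F i u.
Proof.
move=> S; apply/negP => L; case: (Hb : [/\ _, _, _, _ & _]) => _ Hx _ _ _.
by move: (Hx i u w L); rewrite S.
Qed.

Lemma sib_internal i u w : sibb F i u w -> internal F u.
Proof.
move=> Sb; have /and5P [ui _ ur _ _] := Sb.
rewrite /internal; apply/andP; split.
  apply/existsP => -[k /eqP E]; move: ui; rewrite E => /rt_VT ki; subst k.
  by move: ur; rewrite E eqxx.
apply/existsP => -[k L].
have L' : leafb F i u.
  case: (eqVneq k i) => [E| ki]; first by rewrite -E.
  by case/andP: (common_leaf ki (leaf_in L) ui).
by move: (sib_notleaf Sb); rewrite L'.
Qed.

Lemma lca i u w : leafb F i u -> leafb F i w -> u != w ->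
  exists y z, [/\ y \in anc F i u, z \in anc F i w & sibb F i y z].
Proof.
move=> Lu Lw uw.
have ui := leaf_in Lu; have wi := leaf_in Lw.
pose P k := (k < #|V|) && (iter k (par i) u \in anc F i w).
have exP : exists k, P k.
  case: (rt_reach ui) => k kn E; exists k; by rewrite /P kn E rt_anc.
case: (ex_minnP exP) => k /andP [kn Hk] kmin.
case: k kn Hk kmin => [|k] kn Hk kmin.
  exfalso; move: Hk => /= /ancP [l ln E].
  case: l ln E => [|l] ln E; first by move: uw; rewrite E eqxx.
  move: E => /= E.
  have qi := iter_in l wi.
  case: (eqVneq (iter l (par i) w) (rt i)) => qr.
    by move: (leaf_nrt Lu); rewrite E qr par_rt eqxx.
  by move: (leaf_nochild Lu qi qr); rewrite E eqxx.
set y := iter k (par i) u.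
have yn : y \notin anc F i w.
  apply/negP => H; have : P k by rewrite /P (ltnW kn) H.
  by move/kmin; rewrite ltnn.
have yi : y \in VT i by apply: iter_in.
have yr : y != rt i.
  by apply/negP => /eqP E; move: Hk; rewrite /= -/y E par_rt -E (negbTE yn).
have yanc : y \in anc F i u by apply/ancP; exists k => //; apply: ltnW.
move: Hk; rewrite /= -/y => Hx.
pose Q l := (l < #|V|) && (iter l (par i) w == par i y).
have exQ : exists l, Q l by move/ancP: Hx => [l ln E]; exists l; rewrite /Q ln E eqxx.
case: (ex_minnP exQ) => l /andP [ln /eqP El] lmin.
case: l ln El lmin => [|l] ln El lmin.
  by exfalso; move: (leaf_nochild Lw yi yr); rewrite -El eqxx.
set z := iter l (par i) w.
have zanc : z \in anc F i w by apply/ancP; exists l => //; apply: ltnW.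
have zx : z != par i y.
  apply/negP => /eqP E; have : Q l by rewrite /Q (ltnW ln) -/z E eqxx.
  by move/lmin; rewrite ltnn.
have zr : z != rt i.
  by apply/negP => /eqP E; move: zx; rewrite -El /= -/z E par_rt eqxx.
have zi : z \in VT i by apply: iter_in.
have yz : y != z by apply/negP => /eqP E; move: yn; rewrite E zanc.
exists y, z; split => //.
by rewrite /sibb yi zi yr zr yz /= -El /= eqxx.
Qed.

End Basic.

Section Main.
Variables (V : finType) (m : nat) (F : tree_family V m).
Hypothesis Hb : is_btbg F.
Variables (M : {set {set 'I_m}}) (S : pasg V) (ph : {set 'I_m} -> 'I_m * 'I_m).
Hypothesis HM : pseudomatching F M.
Hypothesis HV : Vars S = ~: rootsM F M.
Hypothesis Hc : comfortable1 F M S.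
Hypothesis Hph : cnf_of M ph.

Notation VT := (VT F). Notation rt := (rt F). Notation par := (par F).
Notation adj := (adj F). Notation ell := (ell F). Notation Cl := (Cl F).
Notation half := (Defs.half F).

Lemma adj_sym i j : adj i j -> adj j i.
Proof.
case/andP => ij /existsP [v /andP [a b]]; rewrite /Defs.adj eq_sym ij.
by apply/existsP; exists v; rewrite a b.
Qed.

Lemma adj_neq i j : adj i j -> i != j.
Proof. by case/andP. Qed.

Lemma ell_leaf i j : adj i j -> leafb F i (ell i j) && leafb F j (ell i j).
Proof.
case/andP => _ /existsP [v Hv]; rewrite /Defs.ell.
by case: pickP => [u -> //| /(_ v)]; rewrite Hv.
Qed.

Lemma ell_uniq i j v : adj i j -> leafb F i v -> leafb F j v -> v = ell i j.
Proof.
move=> A Li Lj; case/andP: (ell_leaf A) => Li' Lj'.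
case: (Hb : [/\ _, _, _, _ & _]) => _ _ _ _ /(_ i j (adj_neq A)) [C _].
have X : ell i j \in VT i :&: VT j by rewrite inE (leaf_in Li') (leaf_in Lj').
have /card_le1P /(_ _ X) E := C.
have : v \in VT i :&: VT j by rewrite inE (leaf_in Li) (leaf_in Lj).
by rewrite E inE => /eqP.
Qed.

Lemma ell_sym i j : adj i j -> ell i j = ell j i.
Proof.
move=> A; case/andP: (ell_leaf (adj_sym A)) => L1 L2.
by rewrite -(ell_uniq A L2 L1).
Qed.

Lemma Cl_sym i j : adj i j -> Cl i j = Cl j i.
Proof. by move=> A; rewrite /Defs.Cl setUC. Qed.

Lemma ell_VT i j : adj i j -> ell i j \in VT i.
Proof. by move/ell_leaf/andP => [/leaf_in]. Qed.

Lemma rt_half i j : adj i j -> rt i \in half i j.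
Proof. by move=> A; apply: (rt_anc Hb); apply: ell_VT. Qed.

Lemma half_Cl i j u : u \in half i j -> u \in Cl i j.
Proof. by rewrite /Defs.Cl inE => ->. Qed.

Lemma half_VT i j u : adj i j -> u \in half i j -> u \in VT i.
Proof. by move=> A; apply: (anc_in Hb); apply: ell_VT. Qed.

Lemma Cl_VT i j u : adj i j -> u \in Cl i j -> (u \in VT i) || (u \in VT j).
Proof.
move=> A; rewrite /Defs.Cl inE => /orP [H|H].
  by rewrite (half_VT A H).
by rewrite (half_VT (adj_sym A) H) orbT.
Qed.

Lemma Cl_root i j k : adj i j -> rt k \in Cl i j -> (k == i) || (k == j).
Proof.
move=> A /(Cl_VT A) /orP [/(rt_VT Hb) ->|/(rt_VT Hb) ->]; by rewrite eqxx ?orbT.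
Qed.

Definition e1 e := (ph e).1.
Definition e2 e := (ph e).2.

Lemma set2_adj i j x y : [set i; j] = [set x; y] -> adj i j -> adj x y.
Proof.
move=> E A.
have xi : x \in [set i; j] by rewrite E !inE eqxx.
have yi : y \in [set i; j] by rewrite E !inE eqxx orbT.
have ix : i \in [set x; y] by rewrite -E !inE eqxx.
have jx : j \in [set x; y] by rewrite -E !inE eqxx orbT.
have ij := adj_neq A.
move: xi ix jx; rewrite !inE => xi ix jx.
case: (eqVneq x i) => [Exi|nxi].
  subst x; move: jx; rewrite eq_sym (negbTE ij) /= => /eqP <-; exact: A.
move: xi; rewrite (negbTE nxi) /= => /eqP Exj; subst x.
move: ix; rewrite (negbTE ij) /= => /eqP <-; exact: adj_sym.
Qed.

Lemma edge e : e \in M -> adj (e1 e) (e2 e) /\ e = [set e1 e; e2 e].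
Proof.
move=> eM; have E := Hph eM; split => //.
case: HM => /(_ e eM) /existsP [i /existsP [j /andP [/eqP Ee A]]] _.
by apply: (set2_adj _ A); rewrite -Ee.
Qed.

Lemma e_disj e e' k : e \in M -> e' \in M -> k \in e -> k \in e' -> e = e'.
Proof.
move=> eM e'M ke ke'; apply/eqP/negPn/negP => ne.
case: HM => _ /(_ e e' eM e'M ne) /disjointFr /(_ ke).
by rewrite ke'.
Qed.

Lemma other e i : e \in M -> i \in e -> exists c, adj i c /\ e = [set i; c].
Proof.
move=> eM; case: (edge eM) => A E; rewrite {1}E !inE => /orP [/eqP ->|/eqP ->].
  by exists (e2 e).
by exists (e1 e); split; [apply: adj_sym | rewrite setUC].
Qed.

Lemma rootsP v : reflect (exists e k, [/\ e \in M, k \in e & v = rt k]) (v \in rootsM F M).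
Proof.
apply: (iffP imsetP) => [[k /bigcupP [e eM ke] ->]|[e [k [eM ke ->]]]].
  by exists e, k.
by exists k => //; apply/bigcupP; exists e.
Qed.

Lemma notroot_R v : ~~ isroot F v -> v \notin rootsM F M.
Proof.
move=> H; apply/negP => /rootsP [e [k [_ _ E]]].
by move: H; rewrite E; apply/negP/negPn/existsP; exists k.
Qed.

Lemma S_notR v : v \notin rootsM F M -> exists b, S v = Some b.
Proof.
move=> H; have : v \in Vars S by rewrite HV inE.
by rewrite inE; case: (S v) => // b _; exists b.
Qed.

Lemma S_R v : v \in rootsM F M -> S v = None.
Proof.
move=> H; have : v \notin Vars S by rewrite HV inE H.
by rewrite inE negbK => /eqP.
Qed.

Lemma resp1 e i c u : e \in M -> e = [set i; c] -> u \in Cl i c -> ~~ isroot F u ->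
  S u = Some false.
Proof.
move=> eM E uC nr; case: Hc => _ /(_ e i c eM E) /andP [/forallP /(_ u) H _].
by move: H; rewrite uC nr => /eqP.
Qed.

Lemma resp2 e i c u w : e \in M -> e = [set i; c] -> u \in Cl i c -> internal F u ->
  siblings F u w -> S w = Some true.
Proof.
move=> eM E uC iu sw; case: Hc => _ /(_ e i c eM E) /andP [_ /forallP /(_ u) H].
by move: H; rewrite uC iu => /forallP /(_ w); rewrite sw => /eqP.
Qed.

Lemma three_leaf i j c v : i != j -> i != c -> j != c ->
  leafb F i v -> leafb F j v -> leafb F c v -> False.
Proof.
move=> ij ic jc Li Lj Lc.
case: (Hb : [/\ _, _, _, _ & _]) => _ _ _ /(_ i v Li) C _.
have := cardsD1 i [set k | leafb F k v]; rewrite C inE Li add1n => -[C1].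
have Xj : j \in [set k | leafb F k v] :\ i by rewrite !inE eq_sym ij Lj.
have Xc : c \in [set k | leafb F k v] :\ i by rewrite !inE eq_sym ic Lc.
have /card_le1P /(_ _ Xj) E : #|[set k | leafb F k v] :\ i| <= 1 by rewrite -C1.
by move: Xc; rewrite E inE eq_sym (negbTE jc).
Qed.

Lemma lca_true e i j c : adj i j -> e \in M -> e = [set i; c] -> adj i c -> c != j ->
  exists y, [/\ y \in half i j, ~~ leafb F i y, y \in VT i, y != rt i & S y = Some true].
Proof.
move=> Aij eM E Aic cj.
case/andP: (ell_leaf Aij) => L1 L2; case/andP: (ell_leaf Aic) => L3 L4.
have ne : ell i j != ell i c.
  apply/negP => /eqP Ex; apply: (three_leaf (adj_neq Aij) (adj_neq Aic) _ L1 L2).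
    by rewrite eq_sym.
  by rewrite Ex.
case: (lca Hb L1 L3 ne) => y [z [yA zA Syz]].
have /and5P [yi _ yr _ _] := Syz.
exists y; split => //.
- exact: (sib_notleaf Hb Syz).
apply: (resp2 eM E (u := z)).
- exact: half_Cl.
- exact: (sib_internal Hb (sibb_sym Syz)).
- by apply/existsP; exists i; apply: sibb_sym.
Qed.


Definition agree (A : asg V) := forall v, v \notin rootsM F M -> S v = Some (A v).
Definition pairs (A : asg V) := forall e, e \in M -> A (rt (e1 e)) || A (rt (e2 e)).

Lemma EC_agree A : A \in EC F S -> agree A.
Proof.
rewrite inE => /andP [_ /forallP H] v vR; case: (S_notR vR) => b Eb.
by move: (H v); rewrite Eb /= => /eqP.
Qed.

Lemma SAT_adj A i j : A \in SAT F -> adj i j -> satC A (Cl i j).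
Proof. by rewrite inE => /forallP /(_ i) /forallP /(_ j) /implyP. Qed.

Lemma EC_SAT A : A \in EC F S -> A \in SAT F.
Proof. by rewrite inE => /andP []. Qed.

Lemma notroot_VT i y : y \in VT i -> y != rt i -> ~~ isroot F y.
Proof.
move=> yi yr; apply/negP => /existsP [k /eqP E].
by move: yi yr; rewrite E => /(rt_VT Hb) ->; rewrite eqxx.
Qed.

Lemma agree_false A e i c u : agree A -> e \in M -> e = [set i; c] -> u \in Cl i c ->
  ~~ isroot F u -> A u = false.
Proof.
move=> Ag eM E uC nr; have := resp1 eM E uC nr.
by rewrite (Ag u (notroot_R nr)) => -[].
Qed.

Lemma isrootP v : reflect (exists k, v = rt k) (isroot F v).
Proof. by apply: (iffP existsP) => -[k /eqP E]; exists k => //; rewrite E. Qed.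

Lemma EC_pair A : A \in EC F S -> pairs A.
Proof.
move=> H e eM; case: (edge eM) => Ad E.
case/existsP: (SAT_adj (EC_SAT H) Ad) => u /andP [uC Au].
case: (boolP (isroot F u)) => [/isrootP [k Ek]|nr].
  move: uC; rewrite Ek => /(Cl_root Ad) /orP [/eqP Ek'|/eqP Ek']; by rewrite -Ek' -Ek Au ?orbT.
by rewrite (agree_false (EC_agree H) eM E uC nr) in Au.
Qed.

Lemma rt_Cl i j k : adj i j -> k \in [set i; j] -> rt k \in Cl i j.
Proof.
move=> Ad; rewrite in_set2 => /orP [/eqP ->|/eqP ->]; rewrite /Defs.Cl inE.
  by rewrite rt_half.
by rewrite rt_half ?orbT //; apply: adj_sym.
Qed.

Lemma lca_A A e i j c : agree A -> adj i j -> e \in M -> e = [set i; c] -> adj i c -> c != j ->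
  exists y, [/\ y \in Cl i j, ~~ leafb F i y & A y].
Proof.
move=> Ag Aij eM E Aic cj; case: (lca_true Aij eM E Aic cj) => y [yh nl yi yr Sy].
exists y; split => //; first exact: half_Cl.
by move: Sy; rewrite (Ag y (notroot_R (notroot_VT yi yr))) => -[].
Qed.

Lemma sat_side A i j e : agree A -> pairs A -> adj i j -> e \in M -> i \in e ->
  satC A (Cl i j).
Proof.
move=> Ag Pa Aij eM ie; case: (other eM ie) => c [Aic E].
case: (eqVneq c j) => [cj|cj].
  subst c; case: (edge eM) => _ E'.
  have Y : forall x, x \in [set e1 e; e2 e] -> x \in [set i; j].
    by move=> x; rewrite -E' E.
  have H1 : e1 e \in [set i; j] by apply: Y; rewrite !inE eqxx.
  have H2 : e2 e \in [set i; j] by apply: Y; rewrite !inE eqxx orbT.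
  case/orP: (Pa e eM) => H; apply/existsP.
    by exists (rt (e1 e)); rewrite H rt_Cl.
  by exists (rt (e2 e)); rewrite H rt_Cl.
case: (lca_A Ag Aij eM E Aic cj) => y [yC _ Ay].
by apply/existsP; exists y; rewrite yC Ay.
Qed.

Lemma EC_intro A : agree A -> pairs A -> A \in EC F S.
Proof.
move=> Ag Pa; rewrite inE; apply/andP; split; last first.
  apply/forallP => v; case: (boolP (v \in rootsM F M)) => vR.
    by rewrite S_R.
  by rewrite Ag // eqxx orbT.
rewrite inE; apply/forallP => i; apply/forallP => j; apply/implyP => Aij.
case: (boolP [exists e in M, i \in e]) => [/existsP [e /andP [eM ie]]|ni].
  exact: (sat_side Ag Pa Aij eM ie).
case: (boolP [exists e in M, j \in e]) => [/existsP [e /andP [eM je]]|nj].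
  rewrite Cl_sym //; exact: (sat_side Ag Pa (adj_sym Aij) eM je).
case: Hc => /(_ i j Aij) H _; move: H; rewrite /falsifies negb_forall_in.
case/existsP => u /andP [uC Su].
have uR : u \notin rootsM F M.
  apply/negP => /rootsP [e [k [eM ke Eu]]]; move: uC; rewrite Eu => /(Cl_root Aij).
  case/orP => /eqP Ek; subst k.
    by move/existsP: ni; apply; exists e; rewrite eM ke.
  by move/existsP: nj; apply; exists e; rewrite eM ke.
apply/existsP; exists u; rewrite uC /=; move: Su; rewrite (Ag u uR).
by case: (A u).
Qed.

Lemma no_root_side A i j e : A \in EC F S -> adj i j -> e \in M -> i \in e ->
  A (ell i j) -> (forall u, u \in Cl i j -> u != ell i j -> ~~ A u) -> False.
Proof.
move=> H Aij eM ie Al Ho; have Ag := EC_agree H.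
case: (other eM ie) => c [Aic E].
case: (eqVneq c j) => [cj|cj].
  subst c.
  have lC : ell i j \in Cl i j by apply: half_Cl; apply: self_anc.
  have nr : ~~ isroot F (ell i j).
    by case/andP: (ell_leaf Aij) => L _; apply: (leaf_notroot Hb L).
  by rewrite (agree_false Ag eM E lC nr) in Al.
case: (lca_A Ag Aij eM E Aic cj) => y [yC nl Ay].
have : y != ell i j.
  by apply/negP => /eqP Ey; case/andP: (ell_leaf Aij) => L _; move: nl; rewrite Ey L.
by move/(Ho y yC); rewrite Ay.
Qed.

Lemma Fix_sub A B : A \in EC F S -> B \in EC F S -> Fix F A \subset Fix F B.
Proof.
move=> HA HB; apply/subsetP => v; rewrite !inE.
case/existsP => i /existsP [j /and4P [Aij /eqP Ev Av /forallP Ho]].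
have Ho' : forall u, u \in Cl i j -> u != ell i j -> ~~ A u.
  by move=> u uC; move: (Ho u); rewrite uC -Ev /=; move/implyP.
have nR : forall u, u \in Cl i j -> u \notin rootsM F M.
  move=> u uC; apply/negP => /rootsP [e [k [eM ke Eu]]].
  move: (uC); rewrite Eu => /(Cl_root Aij) /orP [/eqP Ek|/eqP Ek]; subst k.
    by apply: (no_root_side HA Aij eM ke); [rewrite -Ev | exact: Ho'].
  apply: (no_root_side HA (adj_sym Aij) eM ke); first by rewrite -ell_sym // -Ev.
  by move=> u'; rewrite -Cl_sym // -ell_sym //; apply: Ho'.
have AB : forall u, u \in Cl i j -> A u = B u.
  move=> u uC; have := EC_agree HA (nR u uC); rewrite (EC_agree HB (nR u uC)).
  by case.
have vC : v \in Cl i j by rewrite Ev; apply: half_Cl; apply: self_anc.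
apply/existsP; exists i; apply/existsP; exists j.
rewrite Aij Ev eqxx -Ev -AB // Av /=.
apply/forallP => u; apply/implyP => uC; rewrite -AB //.
by move: (Ho u); rewrite uC.
Qed.

Lemma half_sat A e : A \in EC F S -> e \in M ->
  satC A (half (ph e).1 (ph e).2) = A (rt (e1 e)).
Proof.
move=> H eM; case: (edge eM) => Ad E; apply/idP/idP.
  case/existsP => u /andP [uh Au].
  case: (boolP (isroot F u)) => [/isrootP [k Ek]|nr].
    move: uh; rewrite Ek => /(half_VT Ad) /(rt_VT Hb) Ek'.
    by rewrite Ek Ek' in Au.
  by rewrite (agree_false (EC_agree H) eM E (half_Cl uh) nr) in Au.
by move=> Ar; apply/existsP; exists (rt (e1 e)); rewrite Ar rt_half.
Qed.

Lemma ES_EC A : A \in EC F S ->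
  (A \in ES F M ph) = [forall e in M, A (rt (e1 e))].
Proof.
move=> H; rewrite inE (EC_SAT H) /=; apply/forallP/forallP => X e;
  move: (X e); case: (boolP (e \in M)) => //= eM; by rewrite half_sat.
Qed.


Lemma e1_in e : e \in M -> e1 e \in e.
Proof.
move=> eM; case: (edge eM) => _ E.
have : e1 e \in [set e1 e; e2 e] by rewrite !inE eqxx.
by rewrite -E.
Qed.

Lemma e2_in e : e \in M -> e2 e \in e.
Proof.
move=> eM; case: (edge eM) => _ E.
have : e2 e \in [set e1 e; e2 e] by rewrite !inE eqxx orbT.
by rewrite -E.
Qed.

Lemma in_e k e : e \in M -> k \in e -> (k == e1 e) || (k == e2 e).
Proof.
move=> eM; case: (edge eM) => _ E.
have X : forall x, x \in e -> x \in [set e1 e; e2 e] by move=> x; rewrite -E.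
by move/X; rewrite !inE.
Qed.

Definition tau (A : asg V) : {ffun {set 'I_m} -> bool * bool} :=
  [ffun e => if e \in M then (A (rt (e1 e)), A (rt (e2 e))) else (false, false)].

Definition agreeb (A : asg V) := [forall v, (v \in rootsM F M) || (S v == Some (A v))].

Lemma agreebP A : reflect (agree A) (agreeb A).
Proof.
apply: (iffP forallP) => H v.
  by move=> vR; move: (H v); rewrite (negbTE vR) => /eqP.
by case: (boolP (v \in rootsM F M)) => //= vR; rewrite H.
Qed.

Definition X (P : pred (bool * bool)) : {set asg V} :=
  [set A | agreeb A && [forall e in M, P (A (rt (e1 e)), A (rt (e2 e)))]].

Lemma tau_inj P : {in X P &, injective tau}.
Proof.
move=> A B; rewrite !inE => /andP [/agreebP HA _] /andP [/agreebP HB _] E.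
apply/ffunP => v; case: (boolP (v \in rootsM F M)) => vR.
  case/rootsP: vR => e [k [eM ke ->]].
  move/ffunP: E => /(_ e); rewrite !ffunE eM => -[E1 E2].
  by case/orP: (in_e eM ke) => /eqP ->.
by have := HA v vR; rewrite HB // => -[].
Qed.

Definition dec (g : {ffun {set 'I_m} -> bool * bool}) : asg V :=
  [ffun v => if [pick e in M | v == rt (e1 e)] is Some e then (g e).1
   else if [pick e in M | v == rt (e2 e)] is Some e then (g e).2
   else odflt false (S v)].

Lemma pick_none1 v : v \notin rootsM F M -> [pick e in M | v == rt (e1 e)] = None.
Proof.
move=> vR; case: pickP => // e /andP [eM /eqP E]; move: vR; rewrite E.
by move/negP; case; apply/rootsP; exists e, (e1 e); split => //; apply: e1_in.
Qed.

Lemma pick_none2 v : v \notin rootsM F M -> [pick e in M | v == rt (e2 e)] = None.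
Proof.
move=> vR; case: pickP => // e /andP [eM /eqP E]; move: vR; rewrite E.
by move/negP; case; apply/rootsP; exists e, (e2 e); split => //; apply: e2_in.
Qed.

Lemma dec_e1 g e : e \in M -> dec g (rt (e1 e)) = (g e).1.
Proof.
move=> eM; rewrite ffunE; case: pickP => [e' /andP [e'M /eqP E]|none].
  have Ek := rt_inj Hb E.
  by rewrite (e_disj eM e'M (e1_in eM)) // Ek e1_in.
by move: (none e); rewrite eM eqxx.
Qed.

Lemma dec_e2 g e : e \in M -> dec g (rt (e2 e)) = (g e).2.
Proof.
move=> eM; rewrite ffunE; case: pickP => [e' /andP [e'M /eqP E]|_].
  have Ek := rt_inj Hb E.
  have k' : e2 e \in e' by rewrite Ek e1_in.
  have Ee := e_disj eM e'M (e2_in eM) k'; subst e'.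
  by case: (edge eM) => /adj_neq; rewrite Ek eqxx.
case: pickP => [e' /andP [e'M /eqP E]|none].
  have Ek := rt_inj Hb E.
  by rewrite (e_disj eM e'M (e2_in eM)) // Ek e2_in.
by move: (none e); rewrite eM eqxx.
Qed.


Lemma pffunP (P : pred (bool * bool)) (g : {ffun {set 'I_m} -> bool * bool}) :
  reflect (forall e, if e \in M then P (g e) else g e == (false, false))
          (g \in pffun_on (false, false) M P).
Proof.
apply: (iffP familyP) => H e; move: (H e); case: (boolP (e \in M)) => eM; by rewrite /= ?eM ?inE.
Qed.

Lemma tau_im P : tau @: X P = [set g | g \in pffun_on (false, false) M P].
Proof.
apply/setP => g; rewrite inE; apply/imsetP/pffunP.
  case=> A; rewrite inE => /andP [_ /forallP H] -> e; rewrite ffunE.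
  case: (boolP (e \in M)) => eM //; by move: (H e); rewrite eM.
move=> H; exists (dec g).
  rewrite inE; apply/andP; split.
    apply/agreebP => v vR; rewrite ffunE pick_none1 // pick_none2 //.
    by case: (S_notR vR) => b ->.
  apply/forallP => e; apply/implyP => eM; rewrite dec_e1 // dec_e2 //.
  by move: (H e); rewrite eM; case: (g e).
apply/ffunP => e; rewrite ffunE; case: (boolP (e \in M)) => eM.
  by rewrite dec_e1 // dec_e2 //; case: (g e).
by move: (H e); rewrite (negbTE eM) => /eqP.
Qed.

Lemma card_X P : #|X P| = #|P| ^ #|M|.
Proof.
by rewrite -(card_in_imset (@tau_inj P)) tau_im cardsE card_pffun_on.
Qed.

Lemma EC_X : EC F S = X [pred p | p.1 || p.2].
Proof.
apply/setP => A; apply/idP/idP => H.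
  rewrite inE; apply/andP; split; first exact/agreebP/EC_agree.
  by apply/forallP => e; apply/implyP => eM; rewrite inE /= EC_pair.
move: H; rewrite inE => /andP [/agreebP Ag /forallP P]; apply: EC_intro => // e eM.
by move: (P e); rewrite eM.
Qed.

Lemma ESEC_X : ES F M ph :&: EC F S = X [pred p | p.1].
Proof.
apply/setP => A; rewrite inE; apply/idP/idP.
  case/andP => H1 H2; rewrite (ES_EC H2) in H1.
  rewrite inE; apply/andP; split; first exact/agreebP/EC_agree.
  apply/forallP => e; apply/implyP => eM; by move/forallP: H1 => /(_ e); rewrite eM.
rewrite inE => /andP [/agreebP Ag /forallP P].
have H : A \in EC F S.
  apply: EC_intro => // e eM; by move: (P e); rewrite eM /= => ->.
rewrite H andbT (ES_EC H); apply/forallP => e; apply/implyP => eM.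
by move: (P e); rewrite eM.
Qed.

Lemma prob_const A B : A \in EC F S -> B \in EC F S -> prob F A = prob F B.
Proof.
move=> HA HB; rewrite /prob.
have -> : Fix F A = Fix F B by apply/eqP; rewrite eqEsubset !Fix_sub.
by [].
Qed.

Lemma c3 : #|[pred p : bool * bool | p.1 || p.2]| = 3.
Proof.
have E : [pred p : bool * bool | p.1 || p.2] =i [:: (true,true); (true,false); (false,true)].
  by case=> [[] []].
by rewrite (eq_card E) (card_uniqP _).
Qed.

Lemma c2 : #|[pred p : bool * bool | p.1]| = 2.
Proof.
have E : [pred p : bool * bool | p.1] =i [:: (true,true); (true,false)].
  by case=> [[] []].
by rewrite (eq_card E) (card_uniqP _).
Qed.

Local Open Scope ring_scope.

Lemma main : CondPr F (ES F M ph) (EC F S) = (2%:R / 3%:R : rat) ^+ #|M|.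
Proof.
have cEC : #|EC F S| = (3 ^ #|M|)%N by rewrite EC_X card_X c3.
have cES : #|ES F M ph :&: EC F S| = (2 ^ #|M|)%N by rewrite ESEC_X card_X c2.
have : (0 < #|EC F S|)%N by rewrite cEC expn_gt0.
case/card_gt0P => A0 A0E.
have PrE : forall Y : {set asg V}, Y \subset EC F S -> Pr F Y = prob F A0 *+ #|Y|.
  move=> Y /subsetP sY; rewrite /Pr -sumr_const; apply: eq_bigr => A AY.
  by apply: prob_const => //; apply: sY.
rewrite /CondPr (PrE _ (subsetIr _ _)) (PrE _ (subxx _)) cES cEC.
have p0 : prob F A0 != 0.
  by rewrite /prob expf_eq0 negb_and invr_eq0 pnatr_eq0 orbT.
set p := prob F A0.
rewrite -[p *+ (2 ^ _)]mulr_natr -[p *+ (3 ^ _)]mulr_natr natrX natrX.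
rewrite invfM mulrACA mulfV // mul1r.
by rewrite exprMn exprVn.
Qed.



End Main.

Local Open Scope ring_scope.

Theorem lemma13 (V : finType) (m : nat) (F : tree_family V m)
  (M : {set {set 'I_m}}) (S : pasg V) (ph : {set 'I_m} -> 'I_m * 'I_m) :
  is_btbg F -> pseudomatching F M ->
  Vars S = ~: rootsM F M -> comfortable1 F M S ->
  cnf_of M ph ->
  CondPr F (ES F M ph) (EC F S) = (2%:R / 3%:R : rat) ^+ #|M|.
Proof.
move=> Hb HM HV Hc Hph; exact: (main Hb HM HV Hc Hph).
Qed.
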